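(* Let $C_\infty=(\mathbb{N},+)$. Let $\mathcal{R}$ be the commutative DGA-algebra over $\mathbb{H}C_\infty$ with $\mathcal{R}_0$ free on $\{v_0\}$ ($\pi v_0=0$), $\mathcal{R}_1$ free on $\{w_0\}$ ($\pi w_0=1$), $\mathcal{R}_n=0$ for $n\ge2$, zero differential, augmentation the canonical isomorphism $\mathcal{R}_0\cong\mathbb{Z}$, and multiplication $v_0\circ v_0=v_0$, $v_0\circ w_0=w_0$, $w_0\circ w_0=0$. Then there are morphisms of DGA-algebras over $\mathbb{H}C_\infty$, $f:\mathbf{B}(\mathcal{Z}C_\infty)\to\mathcal{R}$ and $g:\mathcal{R}\to\mathbf{B}(\mathcal{Z}C_\infty)$, determined by $f[\,]=v_0$, $f[x]=x\,\big((x-1)_*w_0\big)$ (for $x\ge1$), $g v_0=[\,]$, $g w_0=[1]$, and they form a contraction: $fg=\mathrm{id}_{\mathcal{R}}$ and there is a chain homotopy $\Phi$ from $gf$ to $\mathrm{id}_{\mathbf{B}(\mathcal{Z}C_\infty)}$ (a morphism of $\mathbb{H}C_\infty$-modules of degree $+1$ with $\partial\Phi+\Phi\partial=gf-\mathrm{id}$, up to the sign convention) satisfying $\Phi g=0$, $f\Phi=0$, $\Phi\Phi=0$.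
   Context: For a commutative monoid $M$ (here $C_\infty$, written additively with identity $0$; read $xy$ as $x+y$), $\mathbb{H}M$ has objects the elements of $M$ and morphisms $(x,y):x\to xy$; an $\mathbb{H}M$-module is a functor $\mathbb{H}M\to\mathbf{Ab}$, i.e. groups $\mathcal{A}(x)$ with $y_*:\mathcal{A}(x)\to\mathcal{A}(xy)$, $y_*z_*=(yz)_*$, $e_*=\mathrm{id}$. A free $\mathbb{H}M$-module on a set $S$ with $\pi:S\to M$ has $(\cdot)(x)$ free abelian on $\{(u,s):u\,\pi(s)=x\}$, $y_*(u,s)=(uy,s)$, $s=(e,s)$. Chain complexes of $\mathbb{H}M$-modules form a symmetric monoidal category (tensor product $(\mathcal{A}\otimes\mathcal{B})(x)=\bigoplus_{zt=x}\mathcal{A}(z)\otimes\mathcal{B}(t)/(u_*a\otimes b=a\otimes u_*b)$, Koszul signs, unit the constant module $\mathbb{Z}$); a commutative DGA-algebra over $\mathbb{H}M$ is a commutative monoid there with an augmentation morphism of monoids to $\mathbb{Z}$. $\mathbf{B}(\mathcal{Z}M)$ is the (commutative DGA-) bar construction of $\mathcal{Z}M$: in degree $0$ it is free on $[\,]$ (with $\pi[\,]=e$), and for $n\ge1$ it is the free $\mathbb{H}M$-module on the cells $[x_1|\cdots|x_n]$, $x_i\in M$, $\pi[x_1|\cdots|x_n]=x_1\cdots x_n$, with $[x_1|\cdots|x_n]=0$ if some $x_i=e$; differential $\partial[x_1|\cdots|x_n]=x_{1*}[x_2|\cdots|x_n]+\sum_{i=1}^{n-1}(-1)^i[x_1|\cdots|x_ix_{i+1}|\cdots|x_n]+(-1)^nx_{n*}[x_1|\cdots|x_{n-1}]$;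 multiplication the shuffle product $[x_1|\cdots|x_n]\circ[x_{n+1}|\cdots|x_{n+m}]=\sum_\sigma\mathrm{sgn}(\sigma)[x_{\sigma^{-1}(1)}|\cdots|x_{\sigma^{-1}(n+m)}]$ over $(n,m)$-shuffles; unit $[\,]$; augmentation $\mathbf{B}_0\cong\mathbb{Z}$. Morphisms of DGA-algebras preserve differential, multiplication, unit and augmentation; morphisms from a free module are determined by values on generators. *)

(* Defs.v *)
From HB Require Import structures.
From mathcomp Require Import all_boot all_order all_algebra.
Set Implicit Arguments. Unset Strict Implicit. Unset Printing Implicit Defensive.
Import GRing.Theory.
Local Open Scope ring_scope.

(* H C_oo for C_oo = (nat,+): objects are naturals, and the morphisms       *)
(* x -> x + y are in bijection with proofs of x <= x' (x' = x + y,          *)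
(* y = x' - x).  An H C_oo-module is thus given by groups A(x) and maps     *)
(* A(x) -> A(x') for x <= x'.  A graded object (chain complex) has groups    *)
(* obj n x in degree n at object x.                                         *)
(*   ddif : differential, degree n+1 -> n (zero out of degree 0)            *)
(*   dmul : multiplication A⊗A -> A, given as the family of bilinear maps   *)
(*          A_n(z) x A_m(t) -> A_{n+m}(z+t)                                 *)
(*   dunit: unit, an element of A_0(e) = A_0(0)                             *)
Record dga := DGA {
  dobj : nat -> nat -> zmodType;
  dact : forall n x x', (x <= x')%N -> dobj n x -> dobj n x';
  ddif : forall n x, dobj n.+1 x -> dobj n x;
  dmul : forall n m z t, dobj n z -> dobj m t -> dobj (n + m) (z + t);
  dunit : dobj 0 0;
  daug : forall x, dobj 0 x -> int }.

Arguments dact {d n x x'}.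
Arguments ddif {d n x}.
Arguments dmul {d n m z t}.
Arguments daug {d x}.

Definition is_hmod_morph (A B : dga) (f : forall n x, dobj A n x -> dobj B n x) :=
  (forall n x, {morph f n x : a b / a + b}) /\
  (forall n x x' (h : (x <= x')%N) a, f n x' (dact h a) = dact h (f n x a)).

Definition is_hmod_morph1 (A B : dga) (f : forall n x, dobj A n x -> dobj B n.+1 x) :=
  (forall n x, {morph f n x : a b / a + b}) /\
  (forall n x x' (h : (x <= x')%N) a, f n x' (dact h a) = dact h (f n x a)).

Definition is_dga_morph (A B : dga) (f : forall n x, dobj A n x -> dobj B n x) :=
  is_hmod_morph f /\
  (forall n x (a : dobj A n.+1 x), f n x (ddif a) = ddif (f n.+1 x a)) /\
  (forall n m z t (a : dobj A n z) (b : dobj A m t),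
      f (n + m)%N (z + t)%N (dmul a b) = dmul (f n z a) (f m t b)) /\
  f 0%N 0%N (dunit A) = dunit B /\
  (forall x (a : dobj A 0 x), daug (f 0%N x a) = daug a).

(* B_n(x) is free abelian on the generators (u,[x1|...|xn]) with            *)
(* u + x1 + ... + xn = x, all xi >= 1 (cells with some xi = e are 0).       *)
(* At a fixed object x such a generator is determined by the sequence       *)
(* [x1;...;xn] (with sum <= x), so B_n(x) = functions (finite support)       *)
(* from the finite set of such sequences to Z; y_* keeps the sequence.      *)
Definition Bcell (n x : nat) :=
  {t : n.-tuple 'I_x.+1 |
     all (fun i : 'I_x.+1 => (0 < i)%N) t && (\sum_(i <- t) (i : nat) <= x)%N}.

Definition cellseq n x (c : Bcell n x) : seq nat := map (@nat_of_ord x.+1) (val c).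

Definition Bobj (n x : nat) : zmodType := {ffun Bcell n x -> int}.

(* the basis element of B_n(x) given by the sequence s (i.e. the generator
   u_*[s] with u = x - sum s); it is 0 if s is not a valid cell *)
Definition bas (n x : nat) (s : seq nat) : Bobj n x :=
  [ffun c => if cellseq c == s then 1 else 0].

Definition Bact n x x' (h : (x <= x')%N) (a : Bobj n x) : Bobj n x' :=
  \sum_(c : Bcell n x) bas n x' (cellseq c) *~ a c.

(* merge entries i and i+1 (0-indexed) *)
Definition merge_at (i : nat) (s : seq nat) : seq nat :=
  take i s ++ (nth 0 s i + nth 0 s i.+1)%N :: drop i.+2 s.

Definition dcell (n x : nat) (s : seq nat) : Bobj n x :=
  bas n x (behead s)
  + \sum_(i < n) bas n x (merge_at i s) *~ ((-1) ^+ i.+1)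
  + bas n x (take n s) *~ ((-1) ^+ n.+1).

Definition Bdif n x (a : Bobj n.+1 x) : Bobj n x :=
  \sum_(c : Bcell n.+1 x) dcell n x (cellseq c) *~ a c.

(* signed (p,q)-shuffles of two sequences: pairs (sgn sigma, shuffled seq) *)
Fixpoint shuf (s t : seq nat) : seq (int * seq nat) :=
  match s with
  | [::] => [:: (1, t)]
  | x :: s' =>
      let fix sh2 (t : seq nat) : seq (int * seq nat) :=
        match t with
        | [::] => [:: (1, x :: s')]
        | y :: t' =>
            [seq (p.1, x :: p.2) | p <- shuf s' (y :: t')] ++
            [seq ((-1) ^+ (size (x :: s')) * p.1, y :: p.2) | p <- sh2 t']
        end in sh2 t
  end.

Definition shprod (N X : nat) (s t : seq nat) : Bobj N X :=
  \sum_(p <- shuf s t) bas N X p.2 *~ p.1.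

Definition Bmul n m z t (a : Bobj n z) (b : Bobj m t) : Bobj (n + m) (z + t) :=
  \sum_(c : Bcell n z) \sum_(d : Bcell m t)
     shprod (n + m) (z + t) (cellseq c) (cellseq d) *~ (a c * b d).

Definition Baug x (a : Bobj 0 x) : int := \sum_(c : Bcell 0 x) a c.

Definition Bdga : dga :=
  @DGA Bobj Bact Bdif Bmul (bas 0 0 [::]) Baug.

(* R_n = 0 for n >= 2.  The generators of R_n(x) are (u,v0) with u = x      *)
(* (n = 0) and (u,w0) with u + 1 = x (n = 1, needs 0 < x): at most one.     *)
Definition Rcell (n x : nat) := {i : 'I_1 | (n == 0%N) || ((n == 1%N) && (0 < x)%N)}.

Definition Robj (n x : nat) : zmodType := {ffun Rcell n x -> int}.

(* the generator of R_n(x) (0 if there is none) *)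
Definition Rgen (n x : nat) : Robj n x := [ffun _ => 1].

Definition Rsum n x (a : Robj n x) : int := \sum_(c : Rcell n x) a c.

Definition Ract n x x' (h : (x <= x')%N) (a : Robj n x) : Robj n x' :=
  Rgen n x' *~ Rsum a.

Definition Rdif n x (a : Robj n.+1 x) : Robj n x := 0.

(* v0 o v0 = v0, v0 o w0 = w0 (= w0 o v0), w0 o w0 = 0, extended naturally *)
Definition Rmul n m z t (a : Robj n z) (b : Robj m t) : Robj (n + m) (z + t) :=
  Rgen (n + m) (z + t) *~ (Rsum a * Rsum b).

Definition Raug x (a : Robj 0 x) : int := Rsum a.

Definition Rdga : dga := @DGA Robj Ract Rdif Rmul (Rgen 0 0) Raug.

Definition v0 : dobj Rdga 0 0 := Rgen 0 0.
Definition w0 : dobj Rdga 1 1 := Rgen 1 1.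

(* Main.v *)
Require Import Defs.
From HB Require Import structures.
From mathcomp Require Import all_boot all_order all_algebra.
From mathcomp Require Import zify.
Set Implicit Arguments. Unset Strict Implicit. Unset Printing Implicit Defensive.
Import GRing.Theory.
Local Open Scope ring_scope.

Lemma ffunMzE (T : finType) (V : zmodType) (a : {ffun T -> V}) k c :
  (a *~ k) c = a c *~ k.
Proof.
case: k => n; first by rewrite /intmul ffunMnE.
by rewrite /intmul ffunE ffunMnE.
Qed.

Lemma addMz (V W : zmodType) (h : V -> W) :
  (forall u v, h (u + v) = h u + h v) -> forall v k, h (v *~ k) = h v *~ k.
Proof.
move=> hD.
have h0 : h 0 = 0 by apply/(addrI (h 0)); rewrite -hD !addr0.
have hN : forall v, h (- v) = - h v.
  by move=> v; apply/eqP; rewrite -addr_eq0 -hD addNr h0.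
have hn : forall v n, h (v *+ n) = h v *+ n.
  by move=> v; elim=> [|n IH]; rewrite ?mulr0n ?h0 // !mulrS hD IH.
by move=> v [] n; rewrite /intmul ?hN hn.
Qed.

Definition validb n x (s : seq nat) : bool :=
  [&& size s == n, all (fun i => 0 < i)%N s & (sumn s <= x)%N].

Lemma Bcell_predE n x (t : n.-tuple 'I_x.+1) :
  (all (fun i : 'I_x.+1 => (0 < i)%N) t && (\sum_(i <- t) (i : nat) <= x)%N)
  = validb n x (map (@nat_of_ord x.+1) t).
Proof.
by rewrite /validb size_map size_tuple eqxx all_map sumnE big_map.
Qed.

Lemma cellseq_valid n x (c : Bcell n x) : validb n x (cellseq c).
Proof. by case: c => t; rewrite /cellseq /= Bcell_predE. Qed.

Lemma cellseq_inj n x : injective (@cellseq n x).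
Proof.
move=> c1 c2; rewrite /cellseq => /(inj_map (@ord_inj _)) /val_inj.
exact: val_inj.
Qed.

Lemma map_inordK x (s : seq nat) : (sumn s <= x)%N ->
  map (@nat_of_ord x.+1) (map inord s) = s.
Proof.
elim: s => //= a s IH H; rewrite inordK; last by lia.
by rewrite IH //; lia.
Qed.

Lemma mkcell n x s : validb n x s -> exists c : Bcell n x, cellseq c = s.
Proof.
move=> V; have V' := V; move: V' => /and3P[/eqP Hs _ Hsum].
have Ht : size (map (@inord x) s) == n by rewrite size_map Hs.
pose t := Tuple Ht.
have Hp : all (fun i : 'I_x.+1 => (0 < i)%N) t && (\sum_(i <- t) (i : nat) <= x)%N.
  by rewrite Bcell_predE /= map_inordK.
by exists (exist _ t Hp); rewrite /cellseq /= map_inordK.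
Qed.

Lemma basE n x s (c : Bcell n x) : bas n x s c = (cellseq c == s)%:Z.
Proof. by rewrite /bas ffunE; case: eqP. Qed.

Lemma bas_invalid n x s : ~~ validb n x s -> bas n x s = 0.
Proof.
move=> H; apply/ffunP=> c; rewrite basE ffunE.
by case: eqP => // E; move: H; rewrite -E cellseq_valid.
Qed.

Definition ext (V : zmodType) n x (F : seq nat -> V) (a : Bobj n x) : V :=
  \sum_(c : Bcell n x) F (cellseq c) *~ a c.

Section Ext.
Variables (V : zmodType) (n x : nat).
Implicit Types (F G : seq nat -> V) (a b : Bobj n x).

Lemma extD F a b : ext F (a + b) = ext F a + ext F b.
Proof. by rewrite /ext -big_split; apply: eq_bigr => c _; rewrite ffunE mulrzDr. Qed.

Lemma ext0 F : ext F (0 : Bobj n x) = 0.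
Proof. by rewrite /ext big1 // => c _; rewrite ffunE mulr0z. Qed.

Lemma extN F a : ext F (- a) = - ext F a.
Proof. by rewrite /ext -sumrN; apply: eq_bigr => c _; rewrite ffunE mulrNz. Qed.

Lemma extB F a b : ext F (a - b) = ext F a - ext F b.
Proof. by rewrite extD extN. Qed.

Lemma extMz F a k : ext F (a *~ k) = ext F a *~ k.
Proof. exact: (addMz (extD F)). Qed.

Lemma ext_sum F I (r : seq I) (P : pred I) (E : I -> Bobj n x) :
  ext F (\sum_(i <- r | P i) E i) = \sum_(i <- r | P i) ext F (E i).
Proof. exact: (big_morph _ (extD F) (ext0 F)). Qed.

Lemma ext_bas F s : ext F (bas n x s) = if validb n x s then F s else 0.
Proof.
case: ifP => Hv.
  have [c0 Hc0] := mkcell Hv.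
  rewrite /ext (bigD1 c0) //= big1 ?addr0.
    by rewrite basE Hc0 eqxx.
  move=> c Hc; rewrite basE; case: eqP => [E|]; last by rewrite mulr0z.
  by move: Hc; rewrite -Hc0 in E; rewrite (cellseq_inj E) eqxx.
by rewrite bas_invalid ?Hv // ext0.
Qed.

Lemma ext_basG F s : (forall t, ~~ validb n x t -> F t = 0) ->
  ext F (bas n x s) = F s.
Proof. by move=> HF; rewrite ext_bas; case: ifP => // /negbT /HF ->. Qed.

Lemma ext_eq F G a : (forall s, validb n x s -> F s = G s) -> ext F a = ext G a.
Proof. by move=> H; apply: eq_bigr => c _; rewrite H // cellseq_valid. Qed.

Lemma extFD F G a : ext (fun s => F s + G s) a = ext F a + ext G a.
Proof. by rewrite /ext -big_split; apply: eq_bigr => c _; rewrite mulrzDl. Qed.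

Lemma extFN F a : ext (fun s => - F s) a = - ext F a.
Proof. by rewrite /ext -sumrN; apply: eq_bigr => c _; rewrite mulNrz. Qed.

Lemma extF0 a : ext (fun _ => (0 : V)) a = 0.
Proof. by rewrite /ext big1 // => c _; rewrite mul0rz. Qed.

Lemma ext_self a : ext (bas n x) a = a.
Proof.
apply/ffunP=> d; rewrite /ext sum_ffunE (bigD1 d) //= big1 ?addr0.
  by rewrite ffunMzE basE eqxx mulrzz mul1r.
move=> c Hc; rewrite ffunMzE basE; case: eqP => [/cellseq_inj E|]; last by rewrite mul0rz.
by move: Hc; rewrite E eqxx.
Qed.

End Ext.

Lemma ext_comp (V W : zmodType) n x (h : V -> W) (F : seq nat -> V) (a : Bobj n x) :
  (forall u v, h (u + v) = h u + h v) -> h (ext F a) = ext (fun s => h (F s)) a.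
Proof.
move=> hD.
have h0 : h 0 = 0 by apply/(addrI (h 0)); rewrite -hD !addr0.
rewrite /ext (big_morph h hD h0); apply: eq_bigr => c _; exact: addMz.
Qed.

Definition Rok n x := (n == 0)%N || ((n == 1)%N && (0 < x)%N).

Lemma Robj_triv n x (r r' : Robj n x) : ~~ Rok n x -> r = r'.
Proof. by move=> /negP H; apply/ffunP=> -[i Hi]; exfalso; apply: H. Qed.

Lemma Rcell_uniq n x (c c' : Rcell n x) : c = c'.
Proof.
move: c c' => [i Hi] [j Hj]; apply: val_inj => /=.
by rewrite (ord1 i) (ord1 j).
Qed.

Lemma Rsum_cell n x (c : Rcell n x) (r : Robj n x) : Rsum r = r c.
Proof.
rewrite /Rsum (bigD1 c) //= big1 ?addr0 // => c' Hc.
by move: Hc; rewrite (Rcell_uniq c' c) eqxx.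
Qed.

Lemma Rsum_empty n x (r : Robj n x) : ~~ Rok n x -> Rsum r = 0.
Proof. by move=> /negP H; rewrite /Rsum big1 // => -[i Hi]; exfalso; apply: H. Qed.

Lemma Rsum_gen n x k : Rok n x -> Rsum (Rgen n x *~ k) = k.
Proof.
move=> H; rewrite (Rsum_cell (exist _ ord0 H)) ffunMzE ffunE.
by rewrite mulrzz mul1r.
Qed.

Lemma Rsum_gen1 n x : Rok n x -> Rsum (Rgen n x) = 1.
Proof. by move=> H; rewrite -(mulr1z (Rgen n x)) Rsum_gen. Qed.

Lemma RsumD n x (r r' : Robj n x) : Rsum (r + r') = Rsum r + Rsum r'.
Proof. by rewrite /Rsum -big_split; apply: eq_bigr => c _; rewrite ffunE. Qed.

Lemma Rsum0 n x : Rsum (0 : Robj n x) = 0.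
Proof. by rewrite /Rsum big1 // => c _; rewrite ffunE. Qed.

Lemma Rgen_sum n x (r : Robj n x) : Rgen n x *~ Rsum r = r.
Proof.
apply/ffunP=> c; rewrite ffunMzE ffunE (Rsum_cell c).
by rewrite mulrzz mul1r.
Qed.

Lemma Rok_mono n x x' : (x <= x')%N -> Rok n x -> Rok n x'.
Proof. by rewrite /Rok => H /orP[->//|/andP[-> Hx]]; rewrite (leq_trans Hx H) orbT. Qed.

Lemma valid_mono n x x' s : (x <= x')%N -> validb n x s -> validb n x' s.
Proof. by rewrite /validb => H /and3P[-> -> Hs] /=; lia. Qed.

Lemma valid_Rok n x x' s : validb n x s -> Rok n x' -> Rok n x.
Proof.
rewrite /Rok /validb => /and3P[/eqP Hs Ha Hsum] /orP[->//|/andP[/eqP Hn _]].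
move: Hs; rewrite Hn; case: s Ha Hsum => [|k [|]] //= /andP[Hk _] Hsum _.
rewrite /=; lia.
Qed.

Lemma valid_nseq n x : Rok n x -> validb n x (nseq n 1%N).
Proof.
rewrite /Rok => /orP[/eqP->//|/andP[/eqP-> Hx]].
by rewrite /validb /=; lia.
Qed.

Lemma valid_cons n x a t : validb n.+1 x (a :: t) =
  [&& (0 < a)%N, validb n (x - a) t & (a <= x)%N].
Proof.
rewrite /validb /= eqSS.
case: (size t == n) => //=; case: (0 < a)%N => //=; case: (all _ t) => //=.
by apply/idP/idP; lia.
Qed.

Lemma sumn_drop i (y : seq nat) : sumn (drop i y) = (nth 0 y i + sumn (drop i.+1 y))%N.
Proof.
elim: y i => [|a y IH] [|i] //=; by rewrite ?drop0 ?IH.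
Qed.

Lemma sumn_merge i y : sumn (merge_at i y) = sumn y.
Proof.
rewrite /merge_at sumn_cat /=.
by rewrite -[in RHS](cat_take_drop i y) sumn_cat (sumn_drop i) (sumn_drop i.+1) !addnA.
Qed.

Lemma sumn_take k y : (sumn (take k y) <= sumn y)%N.
Proof. by rewrite -{2}(cat_take_drop k y) sumn_cat leq_addr. Qed.

Lemma sumn_behead y : (sumn (behead y) <= sumn y)%N.
Proof. by case: y => //= a y; rewrite leq_addl. Qed.

Lemma Bmul_ext n m z t (a : Bobj n z) (b : Bobj m t) :
  Bmul a b = ext (fun s => ext (fun u => shprod (n + m) (z + t) s u) b) a.
Proof.
rewrite /Bmul /ext; apply: eq_bigr => c _; rewrite mulrz_suml.
by apply: eq_bigr => d _; rewrite mulrC mulrzA.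
Qed.

Lemma Baug_ext x (a : Bobj 0 x) : Baug a = ext (fun _ => 1) a.
Proof. by rewrite /Baug /ext; apply: eq_bigr => c _; rewrite mulrzz mul1r. Qed.

Lemma shprod_nil_l N X u : shprod N X [::] u = bas N X u.
Proof. by rewrite /shprod /= big_cons big_nil addr0 mulr1z. Qed.

Lemma shprod_nil_r N X s : shprod N X s [::] = bas N X s.
Proof. by case: s => [|a s]; rewrite /shprod /= big_cons big_nil addr0 mulr1z. Qed.

Lemma shprod11 N X : shprod N X [:: 1%N] [:: 1%N] = 0.
Proof.
rewrite /shprod /= !big_cons big_nil /= addr0 mulr1 expr1 mulrN1z mulr1z.
by rewrite subrr.
Qed.

Lemma dcell0 x s : size s = 1%N -> dcell 0 x s = 0.
Proof.
case: s => [|k [|]] //= _; rewrite /dcell big_ord0 addr0 /= expr1 mulrN1z.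
by rewrite subrr.
Qed.

Definition J (a n x : nat) (v : Bobj n x) : Bobj n.+1 x :=
  ext (fun t => bas n.+1 x (a :: t)) v.

Lemma Jbas a n x t : ext (fun t => bas n.+1 x (a :: t)) (bas n x t) = bas n.+1 x (a :: t).
Proof.
rewrite ext_bas; case: ifP => // /negbT H; rewrite bas_invalid //.
apply: contra H; rewrite valid_cons => /and3P[_ H _].
by apply: valid_mono H; rewrite leq_subr.
Qed.

Lemma merge_at0 a y : merge_at 0 (a :: y) = (a + head 0 y)%N :: behead y.
Proof. by case: y => [|b y] //=; rewrite /merge_at /= drop0. Qed.

Lemma merge_atS i a y : merge_at i.+1 (a :: y) = a :: merge_at i y.
Proof. by []. Qed.

Lemma zid_cons (V : zmodType) m (A M B T : V) (G : nat -> V) :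
  A + (M *~ (-1) ^+ 1 + \sum_(i < m) G i *~ (-1) ^+ i.+2) + T *~ (-1) ^+ m.+2
  = A - M + B - (B + \sum_(i < m) G i *~ (-1) ^+ i.+1 + T *~ (-1) ^+ m.+1).
Proof.
rewrite (eq_bigr (fun i : 'I_m => - (G i *~ (-1) ^+ i.+1))); last first.
  by move=> i _; rewrite exprS mulN1r mulrNz.
rewrite sumrN (exprS _ m.+1) mulN1r mulrNz ?mulr1z ?mulrNz.
by rewrite !opprD !addrA addrK.
Qed.

Lemma dcell_cons n x a y :
  dcell n.+1 x (a :: y) = bas n.+1 x y - bas n.+1 x ((a + head 0 y)%N :: behead y)
    + bas n.+1 x (a :: behead y) - J a (dcell n x y).
Proof.
rewrite /J /dcell extD extD extMz ext_sum Jbas Jbas.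
under [in RHS]eq_bigr do rewrite extMz Jbas.
rewrite big_ord_recl /= merge_at0.
rewrite (eq_bigr (fun i : 'I_n => bas n.+1 x (a :: merge_at i y) *~ (-1) ^+ i.+2)) //.
exact: (@zid_cons _ _ _ _ _ _ (fun i => bas n.+1 x (a :: merge_at i y))).
Qed.

Lemma ext_compE (V W : zmodType) (h : V -> W) (hD : forall u v, h (u + v) = h u + h v)
  n x (F : seq nat -> V) (a : Bobj n x) : h (ext F a) = ext (fun s => h (F s)) a.
Proof. exact: ext_comp. Qed.

Lemma ext_mulr n x (G : seq nat -> int) (a : Bobj n x) (y : int) :
  ext G a * y = ext (fun s => G s * y) a.
Proof. exact: (ext_compE (h := fun k => k * y) (fun u v => mulrDl u v y)). Qed.

Lemma mulr_ext n x (G : seq nat -> int) (a : Bobj n x) (y : int) :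
  y * ext G a = ext (fun s => y * G s) a.
Proof. exact: (ext_compE (h := fun k => y * k) (fun u v => mulrDr y u v)). Qed.

Lemma extF_sum (V : zmodType) n x (I : Type) (r : seq I) (F : I -> seq nat -> V) (a : Bobj n x) :
  ext (fun s => \sum_(i <- r) F i s) a = \sum_(i <- r) ext (F i) a.
Proof.
rewrite /ext (eq_bigr (fun c => \sum_(i <- r) F i (cellseq c) *~ a c)).
  exact: exchange_big.
by move=> c _; rewrite mulrz_suml.
Qed.

Lemma BdifD n x (a b : Bobj n.+1 x) : Bdif (a + b) = Bdif a + Bdif b.
Proof. exact: extD. Qed.

Lemma BdifE n x (a : Bobj n.+1 x) : Bdif a = ext (dcell n x) a.
Proof. by []. Qed.

Lemma BactE n x x' (h : (x <= x')%N) (a : Bobj n x) : Bact h a = ext (bas n x') a.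
Proof. by []. Qed.

Definition fF n x (s : seq nat) : Robj n x :=
  if validb n x s then Rgen n x *~ (if n == 0%N then 1 else (sumn s)%:Z) else 0.
Definition fB n x (a : Bobj n x) : Robj n x := ext (fF n x) a.
Definition gR n x (r : Robj n x) : Bobj n x := bas n x (nseq n 1%N) *~ Rsum r.
Definition PhiF n x (s : seq nat) : Bobj n.+1 x :=
  if validb n x s then \sum_(1 <= j < head 0%N s) bas n.+1 x (1%N :: j :: behead s)
  else 0.
Definition Phi n x (a : Bobj n x) : Bobj n.+1 x := ext (PhiF n x) a.
Arguments fB : clear implicits. Arguments gR : clear implicits. Arguments Phi : clear implicits.

Lemma fF_guard n x t : ~~ validb n x t -> fF n x t = 0.
Proof. by rewrite /fF => /negbTE ->. Qed.

Lemma PhiF_guard n x t : ~~ validb n x t -> PhiF n x t = 0.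
Proof. by rewrite /PhiF => /negbTE ->. Qed.

Lemma fB_bas n x s : fB n x (bas n x s) = fF n x s.
Proof. by apply: ext_basG => t; apply: fF_guard. Qed.

Lemma Phi_bas n x s : Phi n x (bas n x s) = PhiF n x s.
Proof. by apply: ext_basG => t; apply: PhiF_guard. Qed.

Lemma PhiF_val n x a y : validb n x (a :: y) ->
  PhiF n x (a :: y) = \sum_(1 <= j < a) bas n.+1 x (1%N :: j :: y).
Proof. by rewrite /PhiF => ->. Qed.

Lemma valid_phi n x a y j : validb n x (a :: y) -> (1 <= j < a)%N ->
  validb n.+1 x (1%N :: j :: y).
Proof.
rewrite /validb /= => /and3P[Hs /andP[Ha Hy] Hsum] Hj.
by rewrite eqSS Hs Hy andbT /=; apply/andP; split; lia.
Qed.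

Lemma gRD n x (r r' : Robj n x) : gR n x (r + r') = gR n x r + gR n x r'.
Proof. by rewrite /gR RsumD mulrzDr. Qed.

Lemma gR0 n x : gR n x 0 = 0.
Proof. by rewrite /gR Rsum0 mulr0z. Qed.

Lemma Phi0 x (a : Bobj 0 x) : Phi 0 x a = 0.
Proof.
transitivity (ext (fun _ => (0 : Bobj 1 x)) a); last exact: extF0.
apply: ext_eq => s Hs; rewrite /PhiF Hs.
by move: Hs; case: s => //= _; rewrite big_geq.
Qed.

Lemma fB_act n x x' (h : (x <= x')%N) (a : Bobj n x) :
  fB n x' (Bact h a) = Ract h (fB n x a).
Proof.
rewrite BactE /fB /Ract (ext_compE (extD (fF n x'))) (ext_compE (@RsumD n x)).
rewrite (ext_compE (mulrzDr (Rgen n x'))).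
apply: ext_eq => s Hs; rewrite -/(fB n x' _) fB_bas.
rewrite /fF Hs (valid_mono h Hs).
case Hok: (Rok n x'); last by apply: Robj_triv; rewrite Hok.
by rewrite Rsum_gen //; apply: valid_Rok Hs Hok.
Qed.

Lemma size_of_valid n x s : validb n x s -> size s = n.
Proof. by case/and3P => /eqP. Qed.

Lemma fB_dif n x (a : Bobj n.+1 x) : fB n x (Bdif a) = 0.
Proof.
rewrite BdifE /fB (ext_compE (extD (fF n x))).
transitivity (ext (fun _ => (0 : Robj n x)) a); last exact: extF0.
apply: ext_eq => s Hs.
case: n a s Hs => [|[|n]] a s Hs.
- by rewrite dcell0 ?ext0 // (size_of_valid Hs).
- have := size_of_valid Hs; case: s Hs => [|a1 [|a2 []]] //= Hs _.
  rewrite /dcell big_ord1 /= !extD !extMz -!/(fB 1 x _) !fB_bas /fF /=.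
  move: Hs; rewrite /validb /= => /andP[/and3P[H1 H2 _] Hsum].
  rewrite ifT; last by apply/andP; split; [rewrite H2 | lia].
  rewrite ifT; last by apply/andP; split; [rewrite addn_gt0 H1 | lia].
  rewrite ifT; last by apply/andP; split; [rewrite H1 | lia].
  apply/ffunP=> c; rewrite !(ffunMzE, ffunE) !mulrzz.
  rewrite expr1 expr2 !addn0; lia.
- by apply: Robj_triv.
Qed.

Lemma fB_shprod n m z t s u : Rok (n + m) (z + t) -> validb n z s -> validb m t u ->
  fB (n + m)%N (z + t)%N (shprod (n + m) (z + t) s u)
  = Rgen (n + m) (z + t) *~ (Rsum (fF n z s) * Rsum (fF m t u)).
Proof.
case: n s => [|[|n]] s; case: m u => [|[|m]] u //= Hok Hs Hu.
- have := size_of_valid Hs; have := size_of_valid Hu.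
  case: s Hs => // Hs; case: u Hu => // Hu _ _.
  by rewrite shprod_nil_l fB_bas /fF /= !Rsum_gen // mulr1.
- change (fB 1 (z+t) (shprod 1 (z+t) s u) = Rgen 1 (z+t) *~ (Rsum (fF 0 z s) * Rsum (fF 1 t u))).
  have := size_of_valid Hs; have := size_of_valid Hu.
  case: s Hs => // Hs; case: u Hu => // k [] // Hu _ _.
  rewrite shprod_nil_l fB_bas /fF Hs Hu.
  move: Hu; rewrite /validb /= => /andP[/andP[Hk _] Hkt].
  rewrite ifT; last by rewrite Hk /=; lia.
  rewrite !Rsum_gen ?mul1r // /Rok /=; lia.
- change (fB 1 (z+t) (shprod 1 (z+t) s u) = Rgen 1 (z+t) *~ (Rsum (fF 1 z s) * Rsum (fF 0 t u))).
  have := size_of_valid Hs; have := size_of_valid Hu.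
  case: u Hu => // Hu; case: s Hs => // k [] // Hs _ _.
  rewrite shprod_nil_r fB_bas /fF Hs Hu.
  move: Hs; rewrite /validb /= => /andP[/andP[Hk _] Hkt].
  rewrite ifT; last by rewrite Hk /=; lia.
  rewrite !Rsum_gen ?mulr1 // /Rok /=; lia.
Qed.

Lemma fB_mul n m z t (a : Bobj n z) (b : Bobj m t) :
  fB (n + m)%N (z + t)%N (Bmul a b) = Rmul (fB n z a) (fB m t b).
Proof.
case Hok: (Rok (n + m) (z + t)); last by apply: Robj_triv; rewrite Hok.
rewrite Bmul_ext /Rmul /fB (ext_compE (extD _)) !(ext_compE (@RsumD _ _)).
rewrite ext_mulr (ext_compE (mulrzDr _)).
apply: ext_eq => s Hs.
rewrite (ext_compE (extD _)) mulr_ext (ext_compE (mulrzDr _)).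
apply: ext_eq => u Hu.
exact: fB_shprod.
Qed.

Lemma fB_unit : fB 0 0 (bas 0 0 [::]) = Rgen 0 0.
Proof. by rewrite fB_bas /fF /= mulr1z. Qed.

Lemma fB_aug x (a : Bobj 0 x) : Raug (fB 0 x a) = Baug a.
Proof.
rewrite /Raug /fB (ext_compE (@RsumD _ _)) Baug_ext.
by apply: ext_eq => s Hs; rewrite /fF Hs /= Rsum_gen.
Qed.

Lemma gR_act n x x' (h : (x <= x')%N) (r : Robj n x) :
  gR n x' (Ract h r) = Bact h (gR n x r).
Proof.
rewrite BactE /gR /Ract extMz ext_bas.
case Hok: (Rok n x).
  by rewrite valid_nseq // Rsum_gen // (Rok_mono h Hok).
by rewrite (Rsum_empty r) ?Hok // !mulr0z Rsum0 mulr0z.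
Qed.

Lemma gR_dif n x (r : Robj n.+1 x) : gR n x (Rdif r) = Bdif (gR n.+1 x r).
Proof.
rewrite /Rdif gR0 BdifE /gR extMz ext_bas.
case: n r => [|n] r.
  by case: ifP => _; rewrite ?dcell0 ?mul0rz.
by rewrite Rsum_empty ?mulr0z.
Qed.

Lemma gR_mul n m z t (r : Robj n z) (s : Robj m t) :
  gR (n + m)%N (z + t)%N (Rmul r s) = Bmul (gR n z r) (gR m t s).
Proof.
rewrite Bmul_ext /gR /Rmul extMz ext_bas.
case Hn: (Rok n z); last first.
  by rewrite (Rsum_empty r) ?Hn // mul0r mulr0z Rsum0 !mulr0z.
case Hm: (Rok m t); last first.
  by rewrite (Rsum_empty s) ?Hm // mulr0 !mulr0z Rsum0 mulr0z ext0 if_same mul0rz.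
rewrite valid_nseq // extMz ext_bas valid_nseq //.
move: Hn Hm; rewrite /Rok.
case: n r => [|[|n]] r //=; case: m s => [|[|m]] s //= Hn Hm.
- by rewrite shprod_nil_l Rsum_gen // -mulrzA mulrC.
- change (bas 1 (z + t) [:: 1%N] *~ Rsum (Rgen 1 (z + t) *~ (Rsum r * Rsum s))
    = shprod 1 (z + t) [::] [:: 1%N] *~ Rsum s *~ Rsum r).
  rewrite shprod_nil_l Rsum_gen; last by rewrite /Rok /=; lia.
  by rewrite -mulrzA mulrC.
- change (bas 1 (z + t) [:: 1%N] *~ Rsum (Rgen 1 (z + t) *~ (Rsum r * Rsum s))
    = shprod 1 (z + t) [:: 1%N] [::] *~ Rsum s *~ Rsum r).
  rewrite shprod_nil_r Rsum_gen; last by rewrite /Rok /=; lia.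
  by rewrite -mulrzA mulrC.
- change (bas 2 (z + t) [:: 1%N; 1%N] *~ Rsum (Rgen 2 (z + t) *~ (Rsum r * Rsum s))
    = shprod 2 (z + t) [:: 1%N] [:: 1%N] *~ Rsum s *~ Rsum r).
  by rewrite shprod11 !mul0rz Rsum_empty // mulr0z.
Qed.

Lemma gR_unit : gR 0 0 (Rgen 0 0) = bas 0 0 [::].
Proof. by rewrite /gR Rsum_gen1 // mulr1z. Qed.

Lemma gR_aug x (r : Robj 0 x) : Baug (gR 0 x r) = Raug r.
Proof. by rewrite Baug_ext /gR extMz ext_bas /= mulrzz mul1r. Qed.

Lemma fgK n x (r : Robj n x) : fB n x (gR n x r) = r.
Proof.
rewrite /gR /fB extMz ext_bas.
case Hok: (Rok n x); last by apply: Robj_triv; rewrite Hok.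
rewrite valid_nseq // /fF valid_nseq //.
have -> : (if n == 0%N then 1 else (sumn (nseq n 1%N))%:Z) = 1.
  by move: Hok; rewrite /Rok; case: n {r} => [|[|n]].
by rewrite mulr1z Rgen_sum.
Qed.

Lemma PhiD n x (a b : Bobj n x) : Phi n x (a + b) = Phi n x a + Phi n x b.
Proof. exact: extD. Qed.

Lemma Phi_act n x x' (h : (x <= x')%N) (a : Bobj n x) :
  Phi n x' (Bact h a) = Bact h (Phi n x a).
Proof.
rewrite !BactE /Phi (ext_compE (extD (PhiF n x'))) (ext_compE (extD (bas n.+1 x'))).
apply: ext_eq => s Hs; rewrite -/(Phi n x' _) Phi_bas.
case: s Hs => [|a1 y] Hs.
  by rewrite /PhiF /= !big_geq // !if_same ext0.
rewrite !PhiF_val ?(valid_mono h Hs) // ext_sum.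
apply: eq_big_nat => j Hj; rewrite ext_bas (valid_phi Hs) //.
Qed.

Lemma Phi_g n x (r : Robj n x) : Phi n x (gR n x r) = 0.
Proof.
rewrite /gR /Phi extMz -/(Phi n x _) Phi_bas /PhiF.
case: ifP => _; last by rewrite mul0rz.
by rewrite big_geq ?mul0rz //; case: n {r}.
Qed.

Lemma f_Phi n x (a : Bobj n x) : fB n.+1 x (Phi n x a) = 0.
Proof.
case: n a => [|n] a; first by rewrite Phi0 /fB ext0.
exact: Robj_triv.
Qed.

Lemma Phi_Phi n x (a : Bobj n x) : Phi n.+1 x (Phi n x a) = 0.
Proof.
rewrite [Phi n x a]/Phi (ext_compE (@PhiD n.+1 x)).
transitivity (ext (fun _ => (0 : Bobj n.+2 x)) a); last exact: extF0.
apply: ext_eq => s Hs; rewrite {1}/PhiF Hs /Phi ext_sum big1 // => j _.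
by rewrite -/(Phi _ _ _) Phi_bas /PhiF /= big_geq // if_same.
Qed.

Lemma homot0 x (a : Bobj 0 x) : Bdif (Phi 0 x a) = gR 0 x (fB 0 x a) - a.
Proof.
rewrite Phi0 BdifE ext0 /fB (ext_compE (@gRD _ _)).
rewrite -[X in _ - X](ext_self a) -extFN -extFD.
symmetry; transitivity (ext (fun _ => (0 : Bobj 0 x)) a); last exact: extF0.
apply: ext_eq => s Hs; have := size_of_valid Hs; case: s Hs => // Hs _.
by rewrite /gR /fF Hs /= Rsum_gen // mulr1z subrr.
Qed.

Lemma JD a n x (u v : Bobj n x) : J a (u + v) = J a u + J a v.
Proof. exact: extD. Qed.
Lemma JB a n x (u v : Bobj n x) : J a (u - v) = J a u - J a v.
Proof. exact: extB. Qed.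
Lemma J_bas a n x t : J a (bas n x t) = bas n.+1 x (a :: t).
Proof. exact: Jbas. Qed.
Lemma J0 a n x : J a (0 : Bobj n x) = 0.
Proof. exact: ext0. Qed.

Lemma ext_dcell_eq (V : zmodType) m x y (F G : seq nat -> V) :
  (forall t, validb m x t -> (sumn t <= sumn y)%N -> F t = G t) ->
  ext F (dcell m x y) = ext G (dcell m x y).
Proof.
move=> H; rewrite /dcell !extD !extMz !ext_sum !ext_bas.
have H' : forall t, (sumn t <= sumn y)%N ->
  (if validb m x t then F t else 0) = (if validb m x t then G t else 0).
  by move=> t Ht; case: ifP => // Hv; apply: H.
rewrite H' ?sumn_behead // (H' (take m y)) ?sumn_take //.
congr (_ + _ + _); apply: eq_bigr => i _; rewrite !extMz !ext_bas H' //.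
by rewrite sumn_merge.
Qed.

Lemma core_key m x s1 y : validb m.+2 x (s1 :: y) ->
  Phi m.+1 x (J s1 (dcell m x y))
  = \sum_(1 <= j < s1) J 1 (J j (dcell m x y)).
Proof.
move=> Hs.
rewrite /Phi [J s1 _]/J (ext_compE (extD _)).
under eq_bigr => j _ do rewrite [J j _]/J (ext_compE (@JD 1%N m.+1 x)).
rewrite -extF_sum; apply: ext_dcell_eq => t Ht Hsum.
rewrite -/(Phi _ _ _) Phi_bas PhiF_val; last first.
  move: Hs Ht; rewrite /validb /= => /and3P[/eqP Hsz /andP[H1 H2] Hx] /and3P[H5 H3 H4].
  rewrite eqSS H5 H1 H3 /=; lia.
by apply: eq_big_nat => j _; rewrite J_bas.
Qed.

Lemma PhiB n x (u v : Bobj n x) : Phi n x (u - v) = Phi n x u - Phi n x v.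
Proof. exact: extB. Qed.

Lemma dcell_cons2 n x a b y :
  dcell n.+1 x (a :: b :: y) = bas n.+1 x (b :: y) - bas n.+1 x ((a + b)%N :: y)
    + bas n.+1 x (a :: y) - J a (dcell n x (b :: y)).
Proof. exact: dcell_cons. Qed.

Lemma J_lin4 a n x (u v w z : Bobj n x) :
  J a (u - v + w - z) = J a u - J a v + J a w - J a z.
Proof. by rewrite !(JB, JD). Qed.

Lemma Phi_lin4 n x (u v w z : Bobj n x) :
  Phi n x (u - v + w - z) = Phi n x u - Phi n x v + Phi n x w - Phi n x z.
Proof. by rewrite !(PhiB, PhiD). Qed.

Lemma zid_term (T : finType) (a b c d e w : {ffun T -> int}) :
  a - b + c - (c - d + e - w) = a - b + d + - e + w.
Proof.
apply/ffunP=> i; rewrite !ffunE.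
move: (a i) (b i) (c i) (d i) (e i) (w i) => ? ? ? ? ? ?; lia.
Qed.

Lemma zid_fin (T : finType) (Gs G1 P E W A : {ffun T -> int}) :
  (- Gs - - G1 + P + - E + W) + (A - (A + G1 + P) + E - W) = 0 - Gs.
Proof.
apply/ffunP=> i; rewrite !ffunE.
move: (Gs i) (G1 i) (P i) (E i) (W i) (A i) => ? ? ? ? ? ?; lia.
Qed.

Lemma split12 (V : zmodType) (F : nat -> V) s1 s2 : (0 < s1)%N -> (0 < s2)%N ->
  \sum_(1 <= j < s1 + s2) F j
  = \sum_(1 <= j < s2) F j + F s2 + \sum_(1 <= j < s1) F (j + s2)%N.
Proof.
move=> H1 H2.
rewrite (big_cat_nat _ (n := s2)) //=; last by lia.
rewrite (big_ltn (m := s2)); last by lia.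
have -> : s2.+1 = (1 + s2)%N by rewrite add1n.
by rewrite big_addn addnK addrA.
Qed.

Lemma core n x s : validb n.+1 x s ->
  Bdif (PhiF n.+1 x s) + Phi n x (dcell n x s) = gR n.+1 x (fF n.+1 x s) - bas n.+1 x s.
Proof.
case: s => [|s1 y] Hs; first by move: Hs; rewrite /validb.
have Hs1 : (0 < s1)%N by move: Hs; rewrite valid_cons => /and3P[].
rewrite (PhiF_val Hs) BdifE ext_sum.
have E1 : \sum_(1 <= j < s1) ext (dcell n.+1 x) (bas n.+2 x [:: 1%N, j & y])
        = \sum_(1 <= j < s1) dcell n.+1 x [:: 1%N, j & y].
  by apply: eq_big_nat => j Hj; rewrite ext_bas (valid_phi Hs).
rewrite E1 {E1}; under eq_bigr do rewrite dcell_cons /=.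
case: n y Hs => [|m] y Hs.
- have Hy : y = [::] by case: y Hs => // a y /size_of_valid.
  subst y.
  under eq_bigr do rewrite dcell0 // J0 subr0.
  rewrite dcell0 // Phi0 addr0 /gR /fF Hs Rsum_gen /=; last first.
    by move: Hs; rewrite /validb /Rok /=; lia.
  rewrite big_split /= sumr_const_nat.
  rewrite (@telescope_sumr_eq _ 1 s1 (fun k => - bas 1 x [:: k])) //; last first.
    by move=> k _; rewrite add1n opprK addrC.
  case: s1 Hs1 Hs => [//|k] _ _.
  rewrite subSS subn0 addn0 -pmulrn mulrS.
  by rewrite opprK -addrA addrC.
- case: y Hs => [|s2 y] Hs; first by move: Hs; rewrite /validb.
  have [Hs2 HY H12 H1y] : [/\ (0 < s2)%N, validb m.+1 x (s2 :: y),
      validb m.+1 x ((s1 + s2)%N :: y) & validb m.+1 x (s1 :: y)].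
    move: Hs; rewrite /validb /= => /and3P[Hsz /andP[_ /andP[H2 H3]] Hsum].
    rewrite !eqSS in Hsz; rewrite !eqSS Hsz H2 H3 addn_gt0 Hs1 /=; split => //; lia.
  under eq_bigr do rewrite dcell_cons2 J_lin4 !J_bas.
  rewrite dcell_cons2 Phi_lin4 !Phi_bas core_key //.
  rewrite (PhiF_val HY) (PhiF_val H12) (PhiF_val H1y).
  rewrite /gR Rsum_empty // mulr0z.
  pose F := fun k => bas m.+2 x [:: 1%N, k & y].
  pose G := fun k => bas m.+2 x [:: k, s2 & y].
  pose W := fun k => J 1 (J k (dcell m x (s2 :: y))).
  rewrite (eq_bigr (fun i => (G i - G i.+1) + F (i + s2)%N + - F i + W i)); last first.
    move=> i _; rewrite add1n. apply: (zid_term (T := Bcell m.+2 x)).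
  rewrite big_split big_split big_split /= sumrN.
  rewrite (@telescope_sumr_eq _ 1 s1 (fun k => - G k)) //; last first.
    by move=> k _; rewrite opprK addrC.
  rewrite (split12 F Hs1 Hs2).
  exact: (zid_fin (T := Bcell m.+2 x)).
Qed.

Lemma homotS n x (a : Bobj n.+1 x) :
  Bdif (Phi n.+1 x a) + Phi n x (Bdif a) = gR n.+1 x (fB n.+1 x a) - a.
Proof.
rewrite {1}/Phi (ext_compE (@BdifD _ _)).
rewrite [Bdif a]BdifE /Phi (ext_compE (extD (PhiF n x))).
rewrite /fB (ext_compE (@gRD _ _)).
rewrite -[X in _ = _ - X](ext_self a) -extFN -!extFD.
by apply: ext_eq => s Hs; exact: core.
Qed.

Theorem theorem7p10 :
  exists (f : forall n x, dobj Bdga n x -> dobj Rdga n x)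
         (g : forall n x, dobj Rdga n x -> dobj Bdga n x)
         (Phi : forall n x, dobj Bdga n x -> dobj Bdga n.+1 x),
    [/\ is_dga_morph f, is_dga_morph g,
        (* values on generators: f[] = v0, f[x] = x ((x-1)_* w0), g v0 = [], g w0 = [1] *)
        f 0%N 0%N (bas 0 0 [::]) = v0 /\
        (forall x (hx : (0 < x)%N), f 1%N x (bas 1 x [:: x]) = dact hx w0 *~ x%:Z),
        g 0%N 0%N v0 = bas 0 0 [::] /\ g 1%N 1%N w0 = bas 1 1 [:: 1%N] &
        [/\ (* f g = id *)
            forall n x (r : dobj Rdga n x), f n x (g n x r) = r,
            (* Phi is a degree +1 module map with d Phi + Phi d = g f - id *)
            is_hmod_morph1 Phi /\
            (forall x (a : dobj Bdga 0 x), ddif (Phi 0%N x a) = g 0%N x (f 0%N x a) - a) /\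
            (forall n x (a : dobj Bdga n.+1 x),
               ddif (Phi n.+1 x a) + Phi n x (ddif a) = g n.+1 x (f n.+1 x a) - a),
            forall n x (r : dobj Rdga n x), Phi n x (g n x r) = 0,
            forall n x (a : dobj Bdga n x), f n.+1 x (Phi n x a) = 0 &
            forall n x (a : dobj Bdga n x), Phi n.+1 x (Phi n x a) = 0]].
Proof.
exists fB, gR, Phi.
split.
- split; [split|].
    by move=> n x a b; exact: extD.
    by move=> n x x' h a; exact: fB_act.
  split; first by move=> n x a; exact: fB_dif.
  split; first by move=> n m z t a b; exact: fB_mul.
  split; first exact: fB_unit.
  by move=> x a; exact: fB_aug.
- split; [split|].
    by move=> n x r r'; exact: gRD.
    by move=> n x x' h r; exact: gR_act.
  split; first by move=> n x r; exact: gR_dif.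
  split; first by move=> n m z t r s; exact: gR_mul.
  split; first exact: gR_unit.
  by move=> x r; exact: gR_aug.
- split; first exact: fB_unit.
  move=> x hx; rewrite fB_bas /fF ifT; last by rewrite /validb /=; lia.
  by rewrite /= /Ract /w0 Rsum_gen1 // mulr1z addn0.
- split; first exact: gR_unit.
  by rewrite /gR /w0 Rsum_gen1 // mulr1z.
- split.
  + by move=> n x r; exact: fgK.
  + split; [split|split].
    * by move=> n x a b; exact: PhiD.
    * by move=> n x x' h a; exact: Phi_act.
    * by move=> x a; exact: homot0.
    * by move=> n x a; exact: homotS.
  + by move=> n x r; exact: Phi_g.
  + by move=> n x a; exact: f_Phi.
  + by move=> n x a; exact: Phi_Phi.
Qed.
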